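(* Suppose that $K$ is algebraically closed and its residue class field $k$ has characteristic $p>0$. Then the set of equivalence classes of $K^\vee\setminus K$ under the relation $\sim$ is infinite.
   Context: $K$ is a complete non-archimedean non-trivially valued field which is not spherically complete; $K^\vee$ is a fixed spherically complete valued field which is an immediate extension of $K$. For $x,y\in K^\vee\setminus K$, $x\sim y$ means there exist $\lambda,\mu\in K$ with $|\lambda x+\mu-y|\le d(y,K)$, where $d(y,K)=\inf_{a\in K}|y-a|$; this is an equivalence relation on $K^\vee\setminus K$. *)

(* Defs.v *)
From HB Require Import structures.
From mathcomp Require Import all_boot all_order all_algebra.
From mathcomp Require Import boolp classical_sets functions cardinality reals.
Set Implicit Arguments. Unset Strict Implicit. Unset Printing Implicit Defensive.
Import Order.TTheory GRing.Theory Num.Theory.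
Local Open Scope ring_scope.
Local Open Scope classical_set_scope.

(* Convention: K^v is modelled as a field L carrying a real-valued absolute
   value [av], and K is modelled as a subfield of L given by a predicate. *)

Section ValuedFields.
Variables (R : realType) (L : fieldType) (av : L -> R).

Definition nonarch_abs : Prop :=
  [/\ forall x, 0 <= av x,
      forall x, av x = 0 <-> x = 0,
      forall x y, av (x * y) = av x * av y &
      forall x y, av (x + y) <= Num.max (av x) (av y)].

Definition is_subfield (K : set L) : Prop :=
  [/\ K 0, K 1,
      forall x y, K x -> K y -> K (x - y),
      forall x y, K x -> K y -> K (x * y) &
      forall x, K x -> x != 0 -> K x^-1].

Definition nontrivially_valued (K : set L) : Prop :=
  exists a, K a /\ a != 0 /\ av a != 1.

Definition complete_in (K : set L) : Prop :=
  forall u : nat -> L, (forall n, K (u n)) ->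
    (forall e : R, 0 < e -> exists N, forall m n, (N <= m)%N -> (N <= n)%N ->
        av (u m - u n) < e) ->
    exists2 l, K l & forall e : R, 0 < e -> exists N, forall n, (N <= n)%N ->
        av (u n - l) < e.

Definition cball (K : set L) (c : L) (r : R) : set L :=
  [set x | K x /\ av (x - c) <= r].

Definition spherically_complete (K : set L) : Prop :=
  forall (I : Type) (c : I -> L) (r : I -> R),
    (exists i : I, True) ->
    (forall i, K (c i)) -> (forall i, 0 < r i) ->
    (forall i j, cball K (c i) (r i) `<=` cball K (c j) (r j) \/
                 cball K (c j) (r j) `<=` cball K (c i) (r i)) ->
    exists2 x, K x & forall i, cball K (c i) (r i) x.

(* L is an immediate extension of K: same value group and same residue field *)
Definition immediate_ext (K : set L) : Prop :=
  (forall x, x != 0 -> exists2 a, K a & (a != 0 /\ av a = av x)) /\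
  (forall x, av x <= 1 -> exists2 a, K a & (av a <= 1 /\ av (x - a) < 1)).

Definition alg_closed_in (K : set L) : Prop :=
  forall p : {poly L}, (forall i, K p`_i) -> (1 < size p)%N ->
    exists2 x, K x & root p x.

(* the residue class field of K has characteristic p, p prime *)
Definition residue_char (p : nat) : Prop := prime p /\ av p%:R < 1.

Definition distK (K : set L) (y : L) : R := inf [set av (y - a) | a in K].

Definition simK (K : set L) (x y : L) : Prop :=
  exists l m, K l /\ K m /\ av (l * x + m - y) <= distK K y.

Definition simclass (K : set L) (x : L) : set L :=
  [set y | ~ K y /\ simK K x y].

Definition simclasses (K : set L) : set (set L) :=
  [set C | exists2 x, ~ K x & C = simclass K x].

End ValuedFields.

(* Main.v *)
Require Import Defs.
From HB Require Import structures.
From mathcomp Require Import all_boot all_order all_algebra.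
From mathcomp Require Import boolp classical_sets functions cardinality reals.
From mathcomp Require Import zify ring lra.
Import Order.TTheory GRing.Theory Num.Theory.
Local Open Scope ring_scope.
Local Open Scope classical_set_scope.


Lemma conv_pow (R : realType) (h : R) n : 0 <= h -> h <= 1 ->
  (1 + h) ^+ n <= 1 + h * (2 ^+ n - 1).
Proof.
move=> h0 h1; elim: n => [|n IH]; first by rewrite !expr0 subrr mulr0 addr0.
have X1 : 1 <= (2 : R) ^+ n by apply: exprn_ege1; rewrite ler1n.
rewrite exprSr [2 ^+ n.+1]exprSr.
apply: le_trans (_ : (1 + h * (2 ^+ n - 1)) * (1 + h) <= _).
  by apply: ler_wpM2r; last exact: IH; clear IH X1; lra.
move: X1; set X := (2 : R) ^+ n => X1.
have H : 0 <= h * (X - 1) * (1 - h) by apply: mulr_ge0; [apply: mulr_ge0|]; lra.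
nra.
Qed.

Lemma eta_exists {R : realType} n (c : R) : 0 <= c -> c < 1 ->
  exists2 h : R, 0 < h & c * (1 + h) ^+ n <= 1.
Proof.
move=> c0 c1.
have X1 : 1 <= (2 : R) ^+ n by apply: exprn_ege1; rewrite ler1n.
have X0 : 0 < (2 : R) ^+ n by apply: lt_le_trans X1.
exists ((1 - c) / 2 ^+ n); first by apply: divr_gt0 => //; lra.
have hle : (1 - c) / 2 ^+ n <= 1 by rewrite ler_pdivrMr // mul1r; lra.
have hge : 0 <= (1 - c) / 2 ^+ n by apply: divr_ge0 => //; lra.
apply: le_trans (_ : c * (1 + (1 - c) / 2 ^+ n * (2 ^+ n - 1)) <= _).
  by apply: ler_wpM2l => //; apply: conv_pow.
have -> : (1 - c) / 2 ^+ n * (2 ^+ n - 1) = (1 - c) - (1 - c) / 2 ^+ n.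
  by rewrite mulrBr mulr1 divfK // gt_eqF.
nra.
Qed.

Lemma small_inv {R : realType} {e : R} : 0 < e ->
  exists N, forall n, (N <= n)%N -> (n.+1%:R)^-1 < e.
Proof.
move=> e0; exists (Num.Def.archi_bound e^-1) => n hn.
have hb : e^-1 < (Num.Def.archi_bound e^-1)%:R by apply: archi_boundP; rewrite invr_ge0 ltW.
rewrite -[e]invrK ltf_pV2 ?posrE ?invr_gt0 ?ltr0Sn //.
apply: lt_le_trans hb _; rewrite ler_nat; exact: leqW.
Qed.

Section Basics.
Variables (R : realType) (L : fieldType) (av : L -> R).
Hypothesis hav : nonarch_abs av.

Lemma av_ge0 x : 0 <= av x. Proof. by case: hav. Qed.
Lemma av_eq0 x : av x = 0 <-> x = 0. Proof. by case: hav. Qed.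
Lemma avM x y : av (x * y) = av x * av y. Proof. by case: hav. Qed.
Lemma avD x y : av (x + y) <= Num.max (av x) (av y). Proof. by case: hav. Qed.
Lemma av0 : av 0 = 0. Proof. exact/av_eq0. Qed.
Lemma av_gt0 x : x != 0 -> 0 < av x.
Proof. move=> x0; rewrite lt_neqAle av_ge0 andbT eq_sym; apply/eqP => /av_eq0 h. by rewrite h eqxx in x0. Qed.
Lemma av1 : av 1 = 1.
Proof.
have h1 : av 1 != 0 by apply/eqP => /av_eq0 /eqP; rewrite oner_eq0.
have : av 1 * av 1 = av 1 * 1 by rewrite -avM !mulr1.
by move/(mulfI h1).
Qed.
Lemma avN1 : av (-1) = 1.
Proof.
have : av (-1) ^+ 2 = 1 by rewrite expr2 -avM mulrNN mulr1 av1.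
move/eqP; rewrite sqrf_eq1 => /orP[/eqP //|/eqP h].
by have := av_ge0 (-1); rewrite h ler0N1.
Qed.
Lemma avN x : av (- x) = av x.
Proof. by rewrite -mulN1r avM avN1 mul1r. Qed.
Lemma avB x y : av (x - y) = av (y - x).
Proof. by rewrite -avN opprB. Qed.
Lemma avD_le x y c : av x <= c -> av y <= c -> av (x + y) <= c.
Proof. by move=> hx hy; apply: le_trans (avD x y) _; rewrite ge_max hx hy. Qed.
Lemma avB_le x y c : av x <= c -> av y <= c -> av (x - y) <= c.
Proof. by move=> hx hy; apply: avD_le => //; rewrite avN. Qed.
Lemma avD_lt x y c : av x < c -> av y < c -> av (x + y) < c.
Proof. by move=> hx hy; apply: le_lt_trans (avD x y) _; rewrite gt_max hx hy. Qed.
Lemma avX x n : av (x ^+ n) = av x ^+ n.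
Proof. by elim: n => [|n IH]; rewrite ?expr0 ?av1 // !exprS avM IH. Qed.
Lemma avV x : av (x^-1) = (av x)^-1.
Proof.
have [->|x0] := eqVneq x 0; first by rewrite invr0 av0 invr0.
have h : av x * av (x^-1) = 1 by rewrite -avM mulfV // av1.
have ax0 : av x != 0 by rewrite gt_eqF // av_gt0.
by rewrite -[av x^-1]mul1r -(mulVf ax0) -mulrA h mulr1.
Qed.
Lemma avn n : av n%:R <= 1.
Proof.
elim: n => [|n IH]; first by rewrite av0.
by rewrite -addn1 natrD; apply: avD_le => //; rewrite av1.
Qed.
Lemma av_sum (I : Type) (r : seq I) (P : pred I) (F : I -> L) c :
  0 <= c -> (forall i, P i -> av (F i) <= c) -> av (\sum_(i <- r | P i) F i) <= c.
Proof.
move=> c0 hF; elim/big_ind: _ => //; first by rewrite av0.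
by move=> x y; apply: avD_le.
Qed.
Lemma av_split x y : av x <= Num.max (av y) (av (x - y)).
Proof. by rewrite -{1}(subrK y x) maxC; exact: avD. Qed.
Variables (K : set L).
Hypothesis hK : is_subfield K.
Hypothesis himm : immediate_ext av K.
Hypothesis halg : alg_closed_in K.

Lemma K0 : K 0. Proof. by case: hK. Qed.
Lemma K1 : K 1. Proof. by case: hK. Qed.
Lemma KB x y : K x -> K y -> K (x - y). Proof. by case: hK => _ _ h _ _; apply: h. Qed.
Lemma KM x y : K x -> K y -> K (x * y). Proof. by case: hK => _ _ _ h _; apply: h. Qed.
Lemma KN x : K x -> K (- x). Proof. by move=> h; rewrite -sub0r; apply: KB => //; apply: K0. Qed.
Lemma KD x y : K x -> K y -> K (x + y).
Proof. by move=> hx hy; rewrite -[y]opprK; apply: KB => //; apply: KN. Qed.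
Lemma KX x n : K x -> K (x ^+ n).
Proof. by move=> hx; elim: n => [|n IH]; [rewrite expr0; apply: K1 | rewrite exprS; apply: KM]. Qed.
Lemma Ksum (I : Type) (r : seq I) (P : pred I) (F : I -> L) :
  (forall i, P i -> K (F i)) -> K (\sum_(i <- r | P i) F i).
Proof. move=> hF; elim/big_ind: _ => //; [exact: K0 | exact: KD]. Qed.

Definition polyK (P : {poly L}) := forall i, K P`_i.
Lemma polyK_C c : K c -> polyK c%:P.
Proof. by move=> hc i; rewrite coefC; case: eqP => _ //; apply: K0. Qed.
Lemma polyK_X : polyK 'X.
Proof. by move=> i; rewrite coefX; case: eqP => _; [apply: K1 | apply: K0]. Qed.
Lemma polyK_B P Q : polyK P -> polyK Q -> polyK (P - Q).
Proof. by move=> hP hQ i; rewrite coefB; apply: KB. Qed.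
Lemma polyK_D P Q : polyK P -> polyK Q -> polyK (P + Q).
Proof. by move=> hP hQ i; rewrite coefD; apply: KD. Qed.
Lemma polyK_M P Q : polyK P -> polyK Q -> polyK (P * Q).
Proof. by move=> hP hQ i; rewrite coefM; apply: Ksum => j _; apply: KM. Qed.
Lemma polyK_exp P n : polyK P -> polyK (P ^+ n).
Proof.
move=> hP; elim: n => [|n IH]; first by rewrite expr0; apply: polyK_C; apply: K1.
by move=> i; rewrite exprS; apply: polyK_M.
Qed.

Definition distK' := distK av K.

Lemma distK_set_ne y : [set av (y - a) | a in K] !=set0.
Proof. by exists (av (y - 0)); exists 0 => //; apply: K0. Qed.
Lemma distK_set_lb y : has_lbound [set av (y - a) | a in K].
Proof. by exists 0 => _ [a _ <-]; apply: av_ge0. Qed.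
Lemma distK_ge0 y : 0 <= distK av K y.
Proof. by apply: lb_le_inf; [apply: distK_set_ne | move=> _ [a _ <-]; apply: av_ge0]. Qed.
Lemma distK_le y a : K a -> distK av K y <= av (y - a).
Proof. by move=> ha; apply: (ge_inf (distK_set_lb y)); exists a. Qed.
Lemma distK_lt y e : distK av K y < e -> exists2 a, K a & av (y - a) < e.
Proof. by move=> /(inf_lt (distK_set_ne y)) [_ [a ha <-] h]; exists a. Qed.

Section Hole.
Variables (x : L).
Hypothesis hx : ~ K x.

Local Notation d := (distK av K x).

Lemma nonattain g : K g -> d < av (x - g).
Proof.
move=> hg; rewrite lt_neqAle distK_le // andbT; apply/eqP => hd.
have w0 : x - g != 0.
  by apply/eqP => /eqP; rewrite subr_eq0 => /eqP xg; apply: hx; rewrite xg.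
case: himm => [h1 h2].
have [b hb [b0 hbw]] := h1 _ w0.
have hq : av ((x - g) / b) <= 1.
  by rewrite avM avV hbw mulfV // gt_eqF // -hbw av_gt0.
have [c hc [_ hlt]] := h2 _ hq.
have : av ((x - g) - b * c) < d.
  have -> : (x - g) - b * c = b * ((x - g) / b - c).
    by rewrite mulrBr mulrCA mulfV // mulr1.
  rewrite avM hd -hbw -{2}[av b]mulr1 ltr_pM2l //; exact: av_gt0.
apply/negP; rewrite -leNgt.
have -> : x - g - b * c = x - (g + b * c) by rewrite opprD addrA.
by apply: distK_le => //; apply: KD => //; apply: KM.
Qed.

Lemma quotK Q q g : Q = q * ('X - g%:P) -> polyK Q -> K g -> polyK q.
Proof.
move=> hQ hPK hg.
suff H : forall k j, (size q <= j + k)%N -> K q`_j.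
  by move=> j; apply: (H (size q)); rewrite leq_addl.
elim=> [|k IH] j hj.
  by rewrite addn0 in hj; rewrite nth_default //; apply: K0.
have e : q`_j = Q`_j.+1 + q`_j.+1 * g.
  by rewrite hQ mulrBr coefB coefMX coefMC /= addrNK.
rewrite e; apply: KD => //; apply: KM => //; apply: IH.
by rewrite addSnnS.
Qed.

Lemma LB n : forall Q, Q \is monic -> polyK Q -> size Q = n.+1 ->
  exists2 m, d < m & m ^+ n <= av Q.[x].
Proof.
have d0 : 0 <= d by apply: distK_ge0.
elim: n => [|n IH] Q hm hQK hs.
  exists (d + 1); first by rewrite ltrDl.
  have hQ : Q = (Q`_0)%:P by apply: size1_polyC; rewrite hs.
  have : lead_coef Q = 1 by apply/monicP.
  rewrite lead_coefE hs /= => h1.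
  by rewrite hQ hornerC h1 av1 // expr0.
have [g hg] : exists2 g, K g & root Q g.
  by apply: halg => //; rewrite hs.
move/factor_theorem => [q hQ].
have q0 : q != 0.
  by apply/eqP => q0; move: hs; rewrite hQ q0 mul0r size_poly0.
have hqm : q \is monic by rewrite -(monicMr q (monicXsubC g)) -hQ.
have hqs : size q = n.+1.
  by move: hs; rewrite hQ size_Mmonic // ?monicXsubC // size_XsubC addn2 /= => [[]].
have [m1 hm1 hle] := IH q hqm (quotK _ _ _ hQ hQK hg) hqs.
have hxg := nonattain _ hg.
exists (Num.min m1 (av (x - g))); first by rewrite lt_min hm1 hxg.
rewrite hQ hornerM hornerXsubC avM exprSr.
have m0 : 0 <= Num.min m1 (av (x - g)).
  by rewrite le_min (le_trans d0 (ltW hm1)) av_ge0.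
apply: ler_pM => //; first exact: exprn_ge0.
  apply: le_trans hle; apply: lerXn2r => //; rewrite ?nnegrE ?ge_min ?lexx //.
  exact: le_trans d0 (ltW hm1).
by rewrite ge_min lexx orbT.
Qed.

End Hole.

Variable p : nat.
Hypothesis hpp : prime p.

Lemma FE u c M T : av u <= M -> av c <= M -> av (u - c) <= T -> 0 <= T -> T <= M ->
  av (u ^+ p - c ^+ p) <= Num.max (T ^+ p) (av p%:R * M ^+ p.-1 * T).
Proof.
move=> hu hc he T0 TM.
have M0 : 0 <= M := le_trans T0 TM.
have -> : u = c + (u - c) by rewrite subrKC.
move: (u - c) he => e he.
rewrite exprDn big_ord_recl /= subn0 expr0 mulr1 bin0 mulr1n addrAC subrr add0r.
apply: av_sum => [|i _]; first by rewrite le_max exprn_ge0.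

rewrite /bump leq0n add1n.
have ip := ltn_ord i.
have ce : av c ^+ (p - i.+1) <= M ^+ (p - i.+1) by apply: lerXn2r; rewrite ?nnegrE ?av_ge0.
have [ei|ei] := eqVneq i.+1 p.
  rewrite ei subnn binn mulr1n expr0 mul1r avX le_max; apply/orP; left.
  by apply: lerXn2r; rewrite ?nnegrE ?av_ge0.
have ip' : (0 < i.+1 < p)%N by rewrite /= ltn_neqAle ei ip.
have [k hk] := dvdnP (prime_dvd_bin hpp ip').
rewrite hk -mulr_natr natrM !avM !avX le_max; apply/orP; right.
have h2 : av e ^+ i.+1 <= M ^+ i * T.
  rewrite exprSr; apply: ler_pM; rewrite ?exprn_ge0 ?av_ge0 //.
  by apply: lerXn2r; rewrite ?nnegrE ?av_ge0 // (le_trans he TM).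
have h3 : av k%:R * av p%:R <= av p%:R by apply: ler_piMl; rewrite ?av_ge0 ?avn.
apply: le_trans (_ : M ^+ (p - i.+1) * (M ^+ i * T) * av p%:R <= _).
  apply: ler_pM; rewrite ?mulr_ge0 ?exprn_ge0 ?av_ge0 //.
  by apply: ler_pM; rewrite ?exprn_ge0 ?av_ge0.
have -> : p.-1 = (p - i.+1 + i)%N by lia.
by rewrite exprD le_eqVlt; apply/orP; left; apply/eqP; ring.
Qed.

Definition Cprop x N P := [/\ P \is monic, polyK P, (size P = N.+1)%N &
  forall e, distK av K x < e -> distK av K P.[x] <= e ^+ N].

Lemma step x k : 0 < distK av K x -> av p%:R < 1 ->
  (exists P, Cprop x (p ^ k)%N P) -> exists P, Cprop x (p ^ k.+1)%N P.
Proof.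
move=> hd hp1 [P [hm hPK hs hD]].
set d := distK av K x in hd hD *.
set N := (p ^ k)%N in hs hD *.
have N0 : (0 < N)%N by rewrite expn_gt0 prime_gt0.
have [eta eta0 heta] := eta_exists (N * p.-1)%N (av p%:R) (av_ge0 _) hp1.
set e1 := d * (1 + eta).
have de1 : d < e1 by rewrite /e1; have := mulr_gt0 hd eta0; nra.
set s0 := e1 ^+ N.
have Ds0 : distK av K P.[x] < s0.
  apply: le_lt_trans (hD ((d + e1) / 2) _) _; first by lra.
  by rewrite ltrXn2r -?lt0n //; lra.
have [a ha hsa] := distK_lt _ _ Ds0.
have hm' : P - a%:P \is monic.
  apply/monicP; rewrite lead_coefDl ?(monicP hm) // size_polyN hs.
  by apply: leq_ltn_trans (size_polyC_leq1 a) _; rewrite ltnS.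
have hsz : size (P - a%:P) = N.+1.
  rewrite size_polyDl // size_polyN hs.
  by apply: leq_ltn_trans (size_polyC_leq1 a) _; rewrite ltnS.
exists ((P - a%:P) ^+ p); split.
- exact: monic_exp.
- by apply: polyK_exp; apply: polyK_B => //; apply: polyK_C.
- have := size_exp (P - a%:P) p; rewrite hsz /= expnSr => <-.
  by rewrite prednK // size_poly_gt0 monic_neq0 // monic_exp.
move=> e de.
have d0 : 0 <= d by apply: distK_ge0.
set d' := e ^+ N.
have dd' : distK av K P.[x] < d'.
  apply: le_lt_trans (hD ((d + e) / 2) _) _; first by lra.
  by rewrite ltrXn2r -?lt0n //; lra.
have [b hb hub] := distK_lt _ _ dd'.
set u := P.[x] - a.
set c := b - a.
have uc : u - c = P.[x] - b by rewrite /u /c; ring.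
have -> : ((P - a%:P) ^+ p).[x] = u ^+ p.
  by rewrite horner_exp hornerD hornerN hornerC.
apply: le_trans (distK_le _ (c ^+ p) _) _; first by apply: KX; apply: KB.
set M := Num.max s0 d'.
have d'0 : 0 <= d' by apply: exprn_ge0; lra.
have hu : av u <= M by rewrite le_max (ltW hsa).
have huc : av (u - c) <= d' by rewrite uc ltW.
have d'M : d' <= M by rewrite le_max lexx orbT.
have hc : av c <= M.
  apply: le_trans (av_split c u) _; rewrite ge_max hu /= avB.
  exact: le_trans huc d'M.
apply: le_trans (FE _ _ _ _ hu hc huc d'0 d'M) _.
have p1 : p = (p.-1).+1 by rewrite prednK // prime_gt0.
have -> : e ^+ (p ^ k.+1) = d' ^+ p by rewrite expnSr exprM.
rewrite ge_max lexx /=.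
have key : av p%:R * M ^+ p.-1 <= d' ^+ p.-1.
  have dN : d ^+ N <= d' by apply: lerXn2r; rewrite ?nnegrE //; lra.
  rewrite /M maxEle; case: ifP => _.
    by apply: ler_piMl; [exact: exprn_ge0 | exact: ltW].
  rewrite /s0 /e1 -exprM exprMn mulrCA.
  apply: le_trans (_ : d ^+ (N * p.-1) * 1 <= _).
    by apply: ler_wpM2l; [apply: exprn_ge0 |].
  by rewrite mulr1 exprM; apply: lerXn2r; rewrite // nnegrE; apply: exprn_ge0.
have -> : d' ^+ p = d' ^+ p.-1 * d' by rewrite -exprSr prednK // prime_gt0.
by apply: ler_wpM2r.
Qed.

Lemma d_pos x : complete_in av K -> ~ K x -> 0 < distK av K x.
Proof.
move=> hcomp hx; rewrite lt_neqAle distK_ge0 andbT; apply/eqP => d0.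
have hex : forall n : nat, exists a, K a /\ av (x - a) < (n.+1%:R)^-1.
  move=> n; have hlt : distK av K x < (n.+1%:R)^-1 by rewrite -d0 invr_gt0 ltr0Sn.
  have [a ha h] := distK_lt x (n.+1%:R)^-1 hlt.
  by exists a.
have [u hu] := choice hex.
have [l hl hlim] : exists2 l, K l & forall e : R, 0 < e -> exists N, forall n, (N <= n)%N ->
        av (u n - l) < e.
  apply: hcomp; first by move=> n; case: (hu n).
  move=> e e0; have [N hN] := small_inv e0; exists N => m n hm hn.
  have -> : u m - u n = (u m - x) + (x - u n) by rewrite addrA subrK.
  apply: avD_lt; first rewrite avB.
    by case: (hu m) => _ h; apply: lt_trans h (hN _ hm).
  by case: (hu n) => _ h; apply: lt_trans h (hN _ hn).
have hxl : av (x - l) <= 0.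
  rewrite leNgt; apply/negP => hpos.
  have [N1 hN1] := hlim _ hpos.
  have [N2 hN2] := small_inv hpos.
  have h1 := hN1 (maxn N1 N2) (leq_maxl _ _).
  have h2 : av (x - u (maxn N1 N2)) < av (x - l).
    by case: (hu (maxn N1 N2)) => _ h; apply: lt_trans h (hN2 _ (leq_maxr _ _)).
  have : av ((x - u (maxn N1 N2)) + (u (maxn N1 N2) - l)) < av (x - l).
    by apply: avD_lt.
  by rewrite addrA subrK ltxx.
have : av (x - l) = 0 by apply/eqP; rewrite eq_le hxl av_ge0.
move/av_eq0/eqP; rewrite subr_eq0 => /eqP xl.
by apply: hx; rewrite xl.
Qed.

Lemma ballsub ci cj ri rj : K ci -> K cj -> 0 < ri ->
  cball av K ci ri `<=` cball av K cj rj -> cball av setT ci ri `<=` cball av setT cj rj.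
Proof.
move=> hci hcj hri hsub y [_ hy].
have hcc : av (ci - cj) <= rj.
  have : cball av K ci ri ci by split => //; rewrite subrr av0 ltW.
  by move/hsub => [].
split => //.
have [->|yc] := eqVneq y ci; first by [].
have w0 : y - ci != 0 by rewrite subr_eq0.
have [a ha [a0 haeq]] := himm.1 _ w0.
have : cball av K cj rj (ci + a).
  by apply: hsub; split; [apply: KD | rewrite addrAC subrr add0r haeq].
move=> [_ h].
have har : av a <= rj.
  have -> : a = (ci + a - cj) - (ci - cj) by rewrite opprB addrA subrK addrC addKr.
  by apply: avB_le.
have -> : y - cj = (y - ci) + (ci - cj) by rewrite addrA subrK.
by apply: avD_le => //; rewrite -haeq.
Qed.

Lemma hole_exists : ~ spherically_complete av K -> spherically_complete av setT ->
  exists x, ~ K x.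
Proof.
move=> nsc sc; case: (pselect (exists x, ~ K x)) => // hne.
exfalso; apply: nsc => I c r hI hc hr hch.
have hchL : forall i j, cball av setT (c i) (r i) `<=` cball av setT (c j) (r j) \/
                 cball av setT (c j) (r j) `<=` cball av setT (c i) (r i).
  move=> i j; case: (hch i j) => h; [left | right]; apply: ballsub => //.
have [y _ hy] := sc I c r hI (fun _ => Logic.I) hr hchL.
have Ky : K y by apply: contrapT => ny; apply: hne; exists y.
exists y => // i; case: (hy i) => _ h; by split.
Qed.

Lemma main_in : complete_in av K -> ~ spherically_complete av K ->
  spherically_complete av setT -> av p%:R < 1 -> infinite_set (simclasses av K).
Proof.
move=> hcomp hnsc hsc hp1.
have [x hx] := hole_exists hnsc hsc.
have hd := d_pos x hcomp hx.
have d0 : 0 <= distK av K x by apply: distK_ge0.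
have p1 : (1 < p)%N by apply: prime_gt1.
have hC : forall k, exists P, Cprop x (p ^ k)%N P.
  elim=> [|k IH]; last exact: step x k hd hp1 IH.
  exists 'X; split; [exact: monicX | exact: polyK_X | by rewrite size_polyX expn0 |].
  by move=> e he; rewrite hornerX expn0 expr1 ltW.
have [F hF] := choice hC.
pose z := fun k => (F k).[x].
have hbig : forall k Q, Q \is monic -> polyK Q -> size Q = (p ^ k).+1 ->
    distK av K (z k) < av Q.[x].
  move=> k Q hm hQ hs; have [m hm1 hm2] := LB x hx (p ^ k) Q hm hQ hs.
  case: (hF k) => _ _ _ hD.
  apply: le_lt_trans (hD ((distK av K x + m) / 2) _) _; first by lra.
  apply: lt_le_trans hm2; rewrite ltrXn2r -?lt0n ?expn_gt0 ?prime_gt0 //; lra.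
have hsmall : forall k (Q : {poly L}), (size Q <= (p ^ k))%N ->
    (F k - Q) \is monic /\ size (F k - Q) = (p ^ k).+1.
  move=> k Q hQ; case: (hF k) => hm _ hs _.
  have hlt : (size (- Q) < size (F k))%N by rewrite size_polyN hs ltnS.
  split; last by rewrite size_polyDl.
  by apply/monicP; rewrite lead_coefDl // (monicP hm).
have hnz : forall k, ~ K (z k).
  move=> k hzk; case: (hF k) => _ hPK hs _.
  have hpk : (0 < p ^ k)%N by rewrite expn_gt0 prime_gt0.
  have [hm hs'] := hsmall k (z k)%:P (leq_trans (size_polyC_leq1 _) hpk).
  have := hbig k _ hm (polyK_B _ _ hPK (polyK_C _ hzk)) hs'.
  rewrite hornerD hornerN hornerC subrr av0 ltNge distK_ge0 //.
have hsep : forall j k, (j < k)%N -> ~ simK av K (z j) (z k).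
  move=> j k jk [l [m [hl [hm hle]]]].
  case: (hF j) => _ hPKj hsj _; case: (hF k) => _ hPKk hsk _.
  have hsz : (size (l%:P * F j + m%:P)%R <= p ^ k)%N.
    apply: leq_trans (size_polyD _ _) _; rewrite geq_max; apply/andP; split.
      apply: leq_trans (size_polyMleq _ _) _.
      apply: leq_trans (_ : ((1 + size (F j)).-1 <= _)%N).
        by rewrite -!subn1 leq_sub2r // leq_add2r size_polyC_leq1.
      by rewrite add1n /= hsj ltn_exp2l.
    by apply: leq_trans (size_polyC_leq1 _) _; rewrite expn_gt0 prime_gt0.
  have [hmQ hsQ] := hsmall k _ hsz.
  have hKQ : polyK (F k - (l%:P * F j + m%:P)).
    apply: polyK_B => //; apply: polyK_D; last exact: polyK_C.
    by apply: polyK_M => //; apply: polyK_C.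
  have := hbig k _ hmQ hKQ hsQ.
  rewrite hornerD hornerN hornerD hornerM !hornerC -/(z k) -/(z j) avB.
  by rewrite ltNge hle.
have refl : forall k, simK av K (z k) (z k).
  move=> k; exists 1, 0; split; [exact: K1 | split; [exact: K0 |]].
  by rewrite mul1r addr0 subrr av0 distK_ge0.
apply/infiniteP; apply/pcard_leP; apply/injfunPex.
exists (fun k => simclass av K (z k)).
  by move=> k _; exists (z k).
move=> j k _ _ hjk; case: (ltngtP j k) => // h; exfalso.
  have : simclass av K (z k) (z k) by split.
  by rewrite -hjk => -[_ hs]; exact: hsep j k h hs.
have : simclass av K (z j) (z j) by split.
by rewrite hjk => -[_ hs]; exact: hsep k j h hs.
Qed.

End Basics.

Theorem mainTheorem5 (R : realType) (L : fieldType) (av : L -> R)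
  (K : set L) (p : nat) :
  nonarch_abs av ->
  is_subfield K ->
  nontrivially_valued av K ->
  complete_in av K ->
  ~ spherically_complete av K ->
  spherically_complete av setT ->
  immediate_ext av K ->
  alg_closed_in K ->
  residue_char av p ->
  infinite_set (simclasses av K).
Proof.
move=> hav hK _ hcomp hnsc hsc himm halg [hpp hp1].
exact: (main_in _ _ _ hav K hK himm halg p hpp hcomp hnsc hsc hp1).
Qed.
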